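(* Let $S$ be an idempotent semiring and define the binary relation $\sigma$ on $S$ by: $a\,\sigma\, b$ if and only if $aba=aba+a+aba$ and $bab=bab+b+bab$. Then the congruence on $S$ generated by $\sigma$ is the least distributive lattice congruence on $S$.
   Context: An idempotent semiring is an algebra $(S,+,\cdot)$ with two binary operations such that $(S,+)$ and $(S,\cdot)$ are bands (associative, with $x+x=x$ and $xx=x$), and both distributive laws $x(y+z)=xy+xz$ and $(x+y)z=xz+yz$ hold; addition is not assumed commutative. A distributive lattice congruence on $S$ is a congruence $\rho$ such that $S/\rho$ is a distributive lattice, i.e. $S/\rho$ satisfies $x+y\approx y+x$, $xy\approx yx$ and $x+xy\approx x$ (in addition to the idempotent semiring axioms). Every idempotent semiring has a least distributive lattice congruence. *)

(* Defs.v *)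
Section Defs.
Context {S : Type}.
Variables (add mul : S -> S -> S).

Definition idempotent_semiring : Prop :=
  (forall x y z, add x (add y z) = add (add x y) z) /\
  (forall x, add x x = x) /\
  (forall x y z, mul x (mul y z) = mul (mul x y) z) /\
  (forall x, mul x x = x) /\
  (forall x y z, mul x (add y z) = add (mul x y) (mul x z)) /\
  (forall x y z, mul (add x y) z = add (mul x z) (mul y z)).

Definition congruence (r : S -> S -> Prop) : Prop :=
  (forall x, r x x) /\
  (forall x y, r x y -> r y x) /\
  (forall x y z, r x y -> r y z -> r x z) /\
  (forall x y u v, r x y -> r u v -> r (add x u) (add y v)) /\
  (forall x y u v, r x y -> r u v -> r (mul x u) (mul y v)).

Definition cong_gen (r : S -> S -> Prop) (a b : S) : Prop :=
  forall c, congruence c -> (forall x y, r x y -> c x y) -> c a b.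

(** Distributive lattice congruence: S/rho satisfies x+y = y+x, xy = yx, x + xy = x
    (the idempotent semiring axioms hold automatically in the quotient). *)
Definition dl_congruence (rho : S -> S -> Prop) : Prop :=
  congruence rho /\
  (forall x y, rho (add x y) (add y x)) /\
  (forall x y, rho (mul x y) (mul y x)) /\
  (forall x y, rho (add x (mul x y)) x).

Definition least_dl_congruence (rho : S -> S -> Prop) : Prop :=
  dl_congruence rho /\
  (forall rho', dl_congruence rho' -> forall a b, rho a b -> rho' a b).

Definition sigma (a b : S) : Prop :=
  mul (mul a b) a = add (add (mul (mul a b) a) a) (mul (mul a b) a) /\
  mul (mul b a) b = add (add (mul (mul b a) b) b) (mul (mul b a) b).

End Defs.

(* Main.v *)
Require Import Defs.

Lemma lemma2p1_aux (S : Type) (add mul : S -> S -> S)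
  (HS : idempotent_semiring add mul) :
  (forall x y, sigma add mul (mul x y) (mul y x)) /\
  (forall x y, sigma add mul x (add x (mul x y))) /\
  (forall x y, sigma add mul x (add (mul y x) x)).
Proof.
  destruct HS as [aA [aI [mA [mI [dl dr]]]]].
  assert (B1 : forall x w, add (add (add x w) x) (add x w) = add x w).
  { intros x w. rewrite <- (aA (add x w) x (add x w)). rewrite (aA x x w), aI, aI. reflexivity. }
  assert (B2 : forall x w, add (add (add w x) x) (add w x) = add w x).
  { intros x w. rewrite <- (aA w x x), aI, aI. reflexivity. }
  split; [|split].
  - intros x y. unfold sigma.
    assert (E : forall a b, mul (mul (mul a b) (mul b a)) (mul a b) = mul a b).
    { intros a b. rewrite <- !mA. rewrite (mA b b), mI, (mA a a b), mI.
      rewrite (mA a b (mul a b)), mI. reflexivity. }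
    rewrite !E, !aI. split; reflexivity.
  - intros x y. unfold sigma.
    assert (Hab : mul x (add x (mul x y)) = add x (mul x y)).
    { rewrite dl, mI, mA, mI. reflexivity. }
    rewrite Hab. rewrite <- (mA (add x (mul x y)) x), Hab, mI.
    rewrite dr, mI. rewrite B1, !aI. split; reflexivity.
  - intros x y. unfold sigma.
    assert (Hba : mul (add (mul y x) x) x = add (mul y x) x).
    { rewrite dr, mI, <- mA, mI. reflexivity. }
    rewrite Hba, mI. rewrite <- mA, Hba. rewrite dl, mI. rewrite B2, !aI. split; reflexivity.
Qed.

Theorem lemma2p1 (S : Type) (add mul : S -> S -> S)
  (HS : idempotent_semiring add mul) :
  least_dl_congruence add mul (cong_gen add mul (sigma add mul)).
Proof.
  destruct (lemma2p1_aux S add mul HS) as [Sc [Sa Sb]].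
  destruct HS as [aA [aI [mA [mI [dl dr]]]]].
  split.
  - split; [|split; [|split]].
    + unfold congruence, cong_gen. split; [|split; [|split; [|split]]].
      * intros x c Hc _. apply (proj1 Hc).
      * intros x y H c Hc Hs. pose proof Hc as Hc'. destruct Hc as [Cr [Cs [Ct [Ca Cm]]]]. apply Cs. apply H; auto.
      * intros x y z H1 H2 c Hc Hs. pose proof Hc as Hc'. destruct Hc as [Cr [Cs [Ct [Ca Cm]]]]. apply (Ct x y z); [apply H1|apply H2]; assumption.
      * intros x y u v H1 H2 c Hc Hs. pose proof Hc as Hc'. destruct Hc as [Cr [Cs [Ct [Ca Cm]]]]. apply Ca; [apply H1|apply H2]; assumption.
      * intros x y u v H1 H2 c Hc Hs. pose proof Hc as Hc'. destruct Hc as [Cr [Cs [Ct [Ca Cm]]]]. apply Cm; [apply H1|apply H2]; assumption.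
    + intros x y c Hc Hs.
      destruct Hc as [Cr [Cs [Ct [Ca Cm]]]].
      assert (Cmc : forall a b, c (mul a b) (mul b a)) by (intros; apply Hs, Sc).
      assert (Cab1 : forall a b, c (add a (mul a b)) a) by (intros; apply Cs, Hs, Sa).
      assert (Cab2 : forall a b, c (add (mul b a) a) a) by (intros; apply Cs, Hs, Sb).
      assert (Cab3 : forall a b, c (add (mul a b) a) a).
      { intros a b. apply (Ct _ (add (mul b a) a)); [apply Ca; auto|auto]. }
      assert (L : c (mul (add x y) (add y x)) (add x y)).
      { rewrite dr, !dl, !mI.
        rewrite aA. rewrite <- (aA (mul x y) x y).
        apply (Ct _ (add (add x y) (mul y x))).
        - apply Ca; auto. rewrite aA. apply Ca; auto.
        - rewrite <- aA. apply Ca; auto. }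
      assert (R : c (mul (add y x) (add x y)) (add y x)).
      { rewrite dr, !dl, !mI.
        rewrite aA. rewrite <- (aA (mul y x) y x).
        apply (Ct _ (add (add y x) (mul x y))).
        - apply Ca; auto. rewrite aA. apply Ca; auto.
        - rewrite <- aA. apply Ca; auto. }
      apply (Ct _ _ _ (Cs _ _ L)). apply (Ct _ _ _ (Cmc _ _)). exact R.
    + intros x y c Hc Hs. apply Hs, Sc.
    + intros x y c Hc Hs. apply (proj1 (proj2 Hc)). apply Hs, Sa.
  - intros rho [[Rr [Rs [Rt [Ra Rm]]]] [Rac [Rmc Rabs]]].
    assert (Hsig : forall a b, sigma add mul a b -> rho (mul a b) a).
    { intros a b [H1 _].
      assert (E : rho (mul (mul a b) a) (mul a b)).
      { apply (Rt _ (mul a (mul a b))); [apply Rmc|]. rewrite mA, mI. apply Rr. }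
      assert (F : rho (add (mul a b) a) a).
      { apply (Rt _ _ _ (Rac _ _)). apply Rabs. }
      apply (Rt _ _ _ (Rs _ _ E)). rewrite H1.
      apply (Rt _ (add (add (mul a b) a) (mul a b))).
      { apply Ra; [apply Ra|]; auto. }
      apply (Rt _ (add a (mul a b))); [apply Ra; auto|apply Rabs]. }
    intros a b H. apply H.
    + split; auto.
    + intros x y Hxy.
      apply (Rt _ _ _ (Rs _ _ (Hsig _ _ Hxy))).
      apply (Rt _ _ _ (Rmc _ _)).
      apply Hsig. destruct Hxy; split; auto.
Qed.
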